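(* Let $0<c<1$. There is no set $A\subseteq\mathbb{N}$ such that $R_A(n)=cn+o(\sqrt{n})$ as $n\to\infty$.
   Context: $\mathbb{N}$ denotes the set of non-negative integers. For $A\subseteq\mathbb{N}$, $R_A(n)$ denotes the number of ordered pairs $(a,a')$ with $a,a'\in A$ and $a+a'=n$. *)

(* Defs.v *)
From Stdlib Require Import Reals Lra Lia List.
Open Scope R_scope.

(* A subset A of N is represented by its (boolean) characteristic function.
   R_A(n) = #{ (a, a') : a, a' in A, a + a' = n } = #{ a in [0, n] : a in A and n - a in A }. *)
Definition RA (A : nat -> bool) (n : nat) : nat :=
  List.length (List.filter (fun a => andb (A a) (A (n - a)%nat)) (List.seq 0 (S n))).

Definition little_o (f g : nat -> R) : Prop :=
  forall eps : R, 0 < eps -> exists N : nat, forall n : nat, (N <= n)%nat ->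
    Rabs (f n) <= eps * Rabs (g n).

(* Main.v *)
Require Import Defs.
From Stdlib Require Import Reals Lra Psatz.
Open Scope R_scope.

Lemma bridge_stdlib (f : nat -> R) :
  little_o f (fun n => sqrt (INR n)) ->
  forall eps : R, 0 < eps -> exists N : nat, forall n : nat, (N <= n)%nat ->
    f n * f n <= eps * eps * INR n.
Proof.
intros H eps he. destruct (H eps he) as [N HN]. exists N. intros n hn.
specialize (HN n hn).
assert (hs : 0 <= sqrt (INR n)) by apply sqrt_pos.
rewrite (Rabs_right (sqrt (INR n))) in HN by lra.
assert (hss : sqrt (INR n) * sqrt (INR n) = INR n) by (apply sqrt_sqrt; apply pos_INR).
assert (ha : f n * f n = Rabs (f n) * Rabs (f n)).
{ rewrite <- Rabs_mult. rewrite Rabs_right; [reflexivity|]. apply Rle_ge. nra. }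
rewrite ha. assert (h0 : 0 <= Rabs (f n)) by apply Rabs_pos.
assert (eps * eps * INR n = (eps * sqrt (INR n)) * (eps * sqrt (INR n))) by (transitivity (eps * eps * (sqrt (INR n) * sqrt (INR n))); [rewrite hss; reflexivity | ring]).
rewrite H0. apply Rmult_le_compat; lra.
Qed.

Module Aux.
From mathcomp Require Import all_boot all_order all_algebra all_solvable all_field.
From mathcomp Require Import complex reals lra zify ring.
Import Order.TTheory GRing.Theory Num.Theory.
Set Implicit Arguments. Unset Strict Implicit. Unset Printing Implicit Defensive.
Local Open Scope ring_scope.

Lemma prim_root_exists_nc (C : numClosedFieldType) n : (n > 0)%N ->
  exists z : C, n.-primitive_root z.
Proof.
pose p : {poly C} := 'X^n - 1; have [r Dp] := closed_field_poly_normal p.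
move=> n_gt0; rewrite (monicP _) ?monicXnsubC // scale1r in Dp.
have rn1: all n.-unity_root r by apply/allP=> z; rewrite -root_prod_XsubC -Dp.
have sz_r: (n < (size r).+1)%N.
  by rewrite -(size_prod_XsubC r id) -Dp size_XnsubC.
have [|z] := hasP (has_prim_root n_gt0 rn1 _ sz_r); last by exists z.
by rewrite -separable_prod_XsubC -Dp separable_Xn_sub_1 // pnatr_eq0 -lt0n.
Qed.

Section Fourier.
Variable C : numClosedFieldType.
Variable L : nat.
Hypothesis L_gt0 : (0 < L)%N.
Variable z : C.
Hypothesis zprim : L.-primitive_root z.

Lemma geo_sum m : \sum_(k < L) (z ^+ m) ^+ k = if (L %| m)%N then L%:R else 0.
Proof.
case: ifP => hd.
  have -> : z ^+ m = 1 by apply/eqP; rewrite -(prim_order_dvd zprim).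
  by under eq_bigr do rewrite expr1n; rewrite sumr_const card_ord.
have hne : z ^+ m - 1 != 0 by rewrite subr_eq0 -(prim_order_dvd zprim) hd.
apply: (mulfI hne); rewrite mulr0 -subrX1 exprAC (prim_expr_order zprim).
by rewrite expr1n subrr.
Qed.

Lemma norm_z : `|z| = 1.
Proof.
apply/eqP; rewrite -(pexpr_eq1 L_gt0) // -normrX (prim_expr_order zprim).
by rewrite normr1.
Qed.

Lemma conj_z : z^* = z ^+ L.-1.
Proof.
have hz : z != 0.
  by apply/eqP => h; move: norm_z; rewrite h normr0 => /eqP; rewrite eq_sym oner_eq0.
apply: (mulfI hz); rewrite -normCK norm_z expr1n -exprS prednK //.
by rewrite (prim_expr_order zprim).
Qed.

Lemma dvd_idx i j : (i < L)%N -> (j < L)%N -> (L %| i + L.-1 * j)%N = (i == j).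
Proof.
move=> hi hj; apply/idP/idP; last first.
  by move/eqP => ->; rewrite -{1}(mul1n j) -mulnDl add1n prednK // dvdn_mulr.
move=> hd.
have e1 : (i + L.-1 * j + j = i + j * L)%N.
  by rewrite -addnA -{2}(mul1n j) -mulnDl addn1 prednK // mulnC.
have : ((i + L.-1 * j + j) %% L = (i + j * L) %% L)%N by rewrite e1.
rewrite [(i + j * L)%N]addnC modnMDl -modnDml (eqP hd) add0n !modn_small //.
by move=> ->.
Qed.

Lemma parseval (Q : {poly C}) : (size Q <= L)%N ->
  \sum_(k < L) `|Q.[z ^+ k]| ^+ 2 = L%:R * \sum_(i < L) `|Q`_i| ^+ 2.
Proof.
move=> hs.
have step : forall k : 'I_L, `|Q.[z ^+ k]| ^+ 2 =
   \sum_(i < L) \sum_(j < L) (Q`_i * (Q`_j)^*) * (z ^+ (i + L.-1 * j)) ^+ k.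
  move=> k; rewrite normCK (horner_coef_wide _ hs) rmorph_sum mulr_suml.
  apply: eq_bigr => i _; rewrite mulr_sumr; apply: eq_bigr => j _.
  rewrite rmorphM rmorphXn /= rmorphXn /= conj_z.
  rewrite exprD mulrACA; congr (_ * _).
  by rewrite exprMn -!exprM mulnC; congr (_ * _); rewrite !exprM exprAC.
rewrite (eq_bigr _ (fun k _ => step k)) exchange_big /= mulr_sumr.
apply: eq_bigr => i _; rewrite exchange_big /=.
rewrite (bigD1 i) //= [X in _ + X]big1 ?addr0.
  by rewrite -mulr_sumr geo_sum dvd_idx // eqxx -normCK mulrC.
move=> j hji; rewrite -mulr_sumr geo_sum dvd_idx //.
by case: eqP => [/val_inj h|]; [rewrite h eqxx in hji | rewrite mulr0].
Qed.

End Fourier.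
Section Fourier2.
Variable C : numClosedFieldType.
Variable M : nat.
Hypothesis M_gt0 : (0 < M)%N.
Variables (P G : {poly C}) (lam t : C).
Hypotheses (hP : (size P <= M)%N) (hG : (size G <= M)%N) (hlam : 0 <= lam) (ht : 0 < t).
Let L := (M + M)%N.
Let E := P * P - lam *: ('X * (G * G)).
Hypothesis hE : \sum_(i < L) `|E`_i| ^+ 2 <= t ^+ 2.

Lemma fourier_ineq : \sum_(i < L) `|P`_i| ^+ 2 <= lam * \sum_(i < L) `|G`_i| ^+ 2 + t.
Proof.
have L_gt0 : (0 < L)%N by rewrite /L addn_gt0 M_gt0.
have [z zprim] := prim_root_exists_nc C L_gt0.
have sP : (size P <= L)%N by apply: leq_trans hP (leq_addr _ _).
have sG : (size G <= L)%N by apply: leq_trans hG (leq_addr _ _).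
have sPP : (size (P * P)%R <= L)%N.
  apply: leq_trans (size_polyMleq _ _) _; rewrite /L; case: (size P) hP => //= n hn.
  lia.
have sX : (size (lam *: ('X * (G * G)))%R <= L)%N.
  apply: leq_trans (size_scale_leq _ _) _.
  apply: leq_trans (size_polyMleq _ _) _; rewrite size_polyX /=.
  apply: leq_trans (leq_add (leqnn 1) (size_polyMleq _ _)) _.
  rewrite /L; case: (size G) hG => //= m hm; lia.
have sE : (size E <= L)%N.
  apply: leq_trans (size_polyD _ _) _; rewrite size_polyN geq_max sPP //.
have hLpos : (0 : C) < L%:R by rewrite ltr0n.
have nz k : `|z ^+ k| = 1 by rewrite normrX (norm_z L_gt0 zprim) expr1n.
have pt k : `|P.[z ^+ k]| ^+ 2 <= lam * `|G.[z ^+ k]| ^+ 2 + `|E.[z ^+ k]|.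
  have -> : `|P.[z ^+ k]| ^+ 2 = `|(P * P).[z ^+ k]| by rewrite hornerM normrM expr2.
  have -> : P * P = lam *: ('X * (G * G)) + E by rewrite /E addrC subrK.
  rewrite hornerD hornerZ hornerM hornerX hornerM.
  apply: le_trans (ler_normD _ _) _; rewrite lerD2r normrM (ger0_norm hlam).
  by rewrite normrM nz mul1r normrM expr2.
have amgm k : t *+ 2 * `|E.[z ^+ k]| <= `|E.[z ^+ k]| ^+ 2 + t ^+ 2.
  have hr : `|E.[z ^+ k]| - t \is Num.real by rewrite realB ?normr_real ?gtr0_real.
  move: (hr); rewrite realEsqr sqrrB => h.
  rewrite -subr_ge0; apply: le_trans h _; rewrite le_eqVlt; apply/orP; left; apply/eqP.
  ring.
have s1 := parseval L_gt0 zprim sP.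
have s2 := parseval L_gt0 zprim sG.
have s3 := parseval L_gt0 zprim sE.
have hsum : \sum_(k < L) `|E.[z ^+ k]| <= L%:R * t.
  have h1 : t *+ 2 * \sum_(k < L) `|E.[z ^+ k]| <= (L%:R * t) * (t *+ 2).
    rewrite mulr_sumr; apply: le_trans; first by apply: ler_sum => k _; exact: amgm.
    rewrite big_split /= s3 sumr_const card_ord.
    have : L%:R * \sum_(i < L) `|E`_i| ^+ 2 <= L%:R * t ^+ 2 by rewrite ler_pM2l.
    move=> h; apply: le_trans (lerD h (lexx _)) _.
    by rewrite le_eqVlt; apply/orP; left; apply/eqP; rewrite -mulr_natr; ring.
  by rewrite mulrC ler_pM2r ?pmulrn_rgt0 // in h1.
have : L%:R * \sum_(i < L) `|P`_i| ^+ 2 <= L%:R * (lam * \sum_(i < L) `|G`_i| ^+ 2 + t).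
  rewrite -s1; apply: le_trans; first by apply: ler_sum => k _; exact: pt.
  rewrite big_split /= -mulr_sumr s2 mulrDr; apply: lerD => //.
  by rewrite mulrCA.
by rewrite ler_pM2l.
Qed.
End Fourier2.

Section FourierReal.
Variable R : rcfType.
Local Notation C := (R[i]).
Local Notation toC := (real_complex R).

Lemma normC_sq (x : R) : `|toC x| ^+ 2 = toC (x ^+ 2).
Proof.
rewrite real_normK ?rmorphXn //.
by rewrite /real_complex_def complex_real.
Qed.

Variable M : nat.
Hypothesis M_gt0 : (0 < M)%N.
Variables (p g : nat -> R) (lam T : R).
Hypotheses (hlam : 0 <= lam) (hT : 0 < T).
Definition trunc (f : nat -> R) i := if (i < M)%N then f i else 0.
Definition conv (f : nat -> R) n := \sum_(j < n.+1) trunc f j * trunc f (n - j).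
Definition Ecoef n := conv p n - lam * (if n is n'.+1 then conv g n' else 0).
Hypothesis hE : \sum_(n < M + M) Ecoef n ^+ 2 <= T.

Lemma sum_trunc (f : nat -> R) :
  \sum_(i < M + M) trunc f i ^+ 2 = \sum_(i < M) f i ^+ 2.
Proof.
rewrite big_split_ord /= [X in _ + X]big1 ?addr0.
  by apply: eq_bigr => i _; rewrite /trunc /= ltn_ord.
by move=> i _; rewrite /trunc /= ltnNge leq_addr /= expr0n.
Qed.

Lemma fourier_real :
  \sum_(i < M) p i ^+ 2 <= lam * \sum_(i < M) g i ^+ 2 + Num.sqrt T.
Proof.
pose P : {poly C} := \poly_(i < M) toC (p i).
pose G : {poly C} := \poly_(i < M) toC (g i).
have cP i : P`_i = toC (trunc p i) by rewrite coef_poly /trunc; case: ifP.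
have cG i : G`_i = toC (trunc g i) by rewrite coef_poly /trunc; case: ifP.
have cPP n : (P * P)`_n = toC (conv p n).
  by rewrite coefM /conv rmorph_sum; apply: eq_bigr => j _; rewrite rmorphM cP cP.
have cGG n : (G * G)`_n = toC (conv g n).
  by rewrite coefM /conv rmorph_sum; apply: eq_bigr => j _; rewrite rmorphM cG cG.
have cE n : (P * P - toC lam *: ('X * (G * G)))`_n = toC (Ecoef n).
  rewrite coefB coefZ coefXM cPP /Ecoef rmorphB rmorphM; congr (_ - _ * _).
  by case: n => [|n] //=; rewrite ?rmorph0 // cGG.
have hsP : (size P <= M)%N by apply: size_poly.
have hsG : (size G <= M)%N by apply: size_poly.
have hl : 0 <= toC lam by rewrite ler0c.
have ht : 0 < toC (Num.sqrt T) by rewrite ltcR sqrtr_gt0.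
have hE' : \sum_(i < M + M) `|(P * P - toC lam *: ('X * (G * G)))`_i| ^+ 2
   <= toC (Num.sqrt T) ^+ 2.
  rewrite -rmorphXn (sqr_sqrtr (ltW hT)).
  under eq_bigr => i _ do rewrite cE normC_sq.
  by rewrite -rmorph_sum lecR.
have := @fourier_ineq C M M_gt0 P G (toC lam) (toC (Num.sqrt T)) hsP hsG hl ht hE'.
have -> : \sum_(i < M + M) `|P`_i| ^+ 2 = toC (\sum_(i < M) p i ^+ 2).
  by rewrite -sum_trunc rmorph_sum; apply: eq_bigr => i _; rewrite cP normC_sq.
have -> : \sum_(i < M + M) `|G`_i| ^+ 2 = toC (\sum_(i < M) g i ^+ 2).
  by rewrite -sum_trunc rmorph_sum; apply: eq_bigr => i _; rewrite cG normC_sq.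
by rewrite -rmorphM -rmorphD lecR.
Qed.
End FourierReal.

Section Decay.
Variable R : realType.

Lemma bernoulli (y : R) m : 0 <= y -> 1 + m%:R * y <= (1 + y) ^+ m.
Proof.
move=> hy; elim: m => [|m IH]; first by rewrite mul0r addr0 expr0.
rewrite exprS -natr1 (_ : 1 + (m%:R + 1) * y = (1 + m%:R * y) + y); last by ring.
have h1 : 1 <= (1 + y) ^+ m by apply: le_trans IH; rewrite lerDl mulr_ge0.
nra.
Qed.

Lemma decay (s eta : R) : 0 <= s -> s < 1 -> 0 < eta ->
  exists M : nat, (0 < M)%N /\ M%:R ^+ 3 * s ^+ M <= eta.
Proof.
move=> s0 s1 he.
have [->|sn0] := eqVneq s 0.
  by exists 1%N; split => //; rewrite expr1 mulr0 ltW.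
have sp : 0 < s by rewrite lt_def sn0 s0.
pose y := (1 - s) / s.
have yp : 0 < y by rewrite /y divr_gt0 // subr_gt0.
have sy : s * (1 + y) = 1 by rewrite /y; field; rewrite gt_eqF.
pose m := (Num.bound (64 / (eta * y ^+ 4))).+1.
have hm : 64 / (eta * y ^+ 4) < m%:R.
  apply: lt_le_trans (archi_boundP _) _; first by rewrite divr_ge0 // ltW // mulr_gt0 // exprn_gt0.
  by rewrite ler_nat.
have hw : s ^+ m * (m%:R * y) <= 1.
  have := bernoulli m (ltW yp).
  have hsm : 0 <= s ^+ m by rewrite exprn_ge0.
  have e : s ^+ m * (1 + y) ^+ m = 1 by rewrite -exprMn sy expr1n.
  nra.
exists (4 * m)%N; split; first by rewrite muln_gt0.
have w0 : 0 <= s ^+ m * (m%:R * y) by apply: mulr_ge0; [exact: exprn_ge0 | apply: mulr_ge0; [exact: ler0n | exact: ltW]].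
have w4 : (s ^+ m * (m%:R * y)) ^+ 4 <= 1 by rewrite exprn_ile1.
have hmy : 64 <= m%:R * y ^+ 4 * eta.
  have hp : 0 < eta * y ^+ 4 by rewrite mulr_gt0 // exprn_gt0.
  rewrite ltr_pdivrMr // in hm; lra.
have -> : (4 * m)%:R ^+ 3 * s ^+ (4 * m) = m%:R ^+ 3 * (s ^+ m) ^+ 4 * 64.
  by rewrite natrM -exprM mulnC; ring.
set Z := m%:R ^+ 3 * (s ^+ m) ^+ 4.
have Z0 : 0 <= Z by rewrite /Z; apply: mulr_ge0; apply: exprn_ge0; [exact: ler0n | exact: exprn_ge0].
have hZ : Z * (m%:R * y ^+ 4) <= 1.
  have -> : Z * (m%:R * y ^+ 4) = (s ^+ m * (m%:R * y)) ^+ 4 by rewrite /Z; ring.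
  exact: w4.
have mp : 0 < m%:R * y ^+ 4 by rewrite mulr_gt0 ?ltr0n // exprn_gt0.
nra.
Qed.
End Decay.

Section Sums.
Variable R : realType.

Lemma geom1 (s : R) M : (\sum_(n < M) s ^+ n) * (1 - s) = 1 - s ^+ M.
Proof.
elim: M => [|M IH]; first by rewrite big_ord0 mul0r expr0 subrr.
by rewrite big_ord_recr /= mulrDl IH exprS; ring.
Qed.

Lemma geom2 (s : R) M : (\sum_(n < M) n%:R * s ^+ n) * (1 - s) ^+ 2
   = s - M%:R * s ^+ M + (M%:R - 1) * s ^+ M.+1.
Proof.
elim: M => [|M IH]; first by rewrite big_ord0 mul0r expr1 mul0r subr0 sub0r mulN1r addrN.
rewrite big_ord_recr /= mulrDl IH -natr1 !exprS; ring.
Qed.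

Lemma trunc_ge0 M (q : nat -> R) i : (forall a, 0 <= q a) -> 0 <= trunc M q i.
Proof. by move=> h; rewrite /trunc; case: ifP. Qed.

Lemma conv_ge0 M (q : nat -> R) n : (forall a, 0 <= q a) -> 0 <= conv M q n.
Proof.
by move=> h; apply: sumr_ge0 => j _; apply: mulr_ge0; apply: trunc_ge0.
Qed.

Lemma sq_ge M (q : nat -> R) : (forall a, 0 <= q a) ->
  \sum_(n < M) conv M q n <= (\sum_(a < M) q a) ^+ 2.
Proof.
move=> hq.
pose Q : {poly R} := \poly_(i < M) q i.
have hQ1 : Q.[1] = \sum_(a < M) q a.
  by rewrite horner_poly; apply: eq_bigr => i _; rewrite expr1n mulr1.
have sQQ : (size (Q * Q)%R <= M + M)%N.
  apply: leq_trans (size_polyMleq _ _) _.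
  have := size_poly M q; rewrite -/Q; lia.
have e : (Q * Q).[1] = \sum_(n < M + M) conv M q n.
  rewrite (horner_coef_wide _ sQQ); apply: eq_bigr => n _.
  rewrite expr1n mulr1 coefM /conv; apply: eq_bigr => j _.
  by rewrite !coef_poly /trunc.
rewrite -hQ1 expr2 -hornerM e big_split_ord /= lerDl.
by apply: sumr_ge0 => i _; apply: conv_ge0.
Qed.

Lemma conv_geom M (b : R) (h : nat -> bool) n :
  conv M (fun a => b ^+ a * (h a)%:R) n =
  b ^+ n * (\sum_(j < n.+1) ((j < M)%N && (n - j < M)%N && h j && h (n - j)%N))%:R.
Proof.
rewrite /conv natr_sum mulr_sumr; apply: eq_bigr => j _.
have hj : (j <= n)%N by rewrite -ltnS ltn_ord.
rewrite /trunc; case: (j < M)%N; case: (n - j < M)%N; rewrite /= ?mul0r ?mulr0 //.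
have -> : b ^+ n = b ^+ j * b ^+ (n - j) by rewrite -exprD subnKC.
by case: (h j); case: (h (n - j)%N); rewrite /= ?mulr0 ?mul0r ?mulr1 ?mul1r ?mulrA.
Qed.

End Sums.
Lemma final_arith (R : realType) (c eps u x tau K : R) : 0 < c -> c < 1 ->
  eps * 20 = c - c * c -> 0 < eps -> 0 <= u -> u <= c + 2 * eps ->
  (c - eps) * ((1 - x) - tau) - K * x <= u * u -> 0 <= tau -> tau <= eps * eps / 4 ->
  0 <= x -> (K + 1) * x <= eps * eps / 4 -> 0 <= K -> False.
Proof.
move=> c0 c1 hd e0 u0 hu hl t0 t1 x0 hx K0.
have f1 : u * u <= (c + 2 * eps) * (c + 2 * eps) by nra.
have ec : eps <= c by nra.
have f2 : (c - eps) * (x + tau) <= x + tau by nra.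
have ee : eps <= 1 / 80 by nra.
have f3 : eps * eps <= eps / 80 by nra.
have f4 : c * eps <= eps by nra.
have f5 : (c - eps) * ((1 - x) - tau) = c - eps - (c - eps) * (x + tau) by ring.
have f6 : (c + 2 * eps) * (c + 2 * eps) = c * c + 4 * (c * eps) + 4 * (eps * eps) by ring.
lra.
Qed.


Lemma sum_bool_le n (F : 'I_n -> bool) : (\sum_(j < n) F j <= n)%N.
Proof.
rewrite -[n in (_ <= n)%N]card_ord -sum1_card; apply: leq_sum => j _; exact: leq_b1.
Qed.

Lemma sum_true n (f : nat -> bool) : (forall j, (j < n)%N -> f j) -> (\sum_(j < n) f j = n)%N.
Proof.
elim: n => [|n IH] hf; first by rewrite big_ord0.
rewrite big_ord_recr /= IH ?hf // => [|j hj]; first by rewrite addn1.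
by apply: hf; apply: ltn_trans hj _.
Qed.

Definition ra (A : nat -> bool) n := (\sum_(j < n.+1) (A j && A (n - j)%N))%N.

Lemma cnt_small (A : nat -> bool) M n : (n < M)%N ->
  (\sum_(j < n.+1) ((j < M)%N && (n - j < M)%N && A j && A (n - j)%N))%N = ra A n.
Proof.
move=> hn; apply: eq_bigr => j _.
have hj : (j <= n)%N by rewrite -ltnS ltn_ord.
have -> : (j < M)%N by apply: leq_ltn_trans hj hn.
by have -> : (n - j < M)%N by apply: leq_ltn_trans (leq_subr _ _) hn.
Qed.

Section Main.
Variable R : realType.

Lemma main_contra (c : R) (A : nat -> bool) : 0 < c -> c < 1 ->
  (forall eps : R, 0 < eps -> exists N : nat, forall n : nat, (N <= n)%N ->
     ((ra A n)%:R - c * n%:R) * ((ra A n)%:R - c * n%:R) <= eps * eps * n%:R) -> False.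
Proof.
move=> c0 c1 hyp.
pose e n : R := (ra A n)%:R - c * n%:R.
pose d := c - c * c.
have d0 : 0 < d by rewrite /d; nra.
pose eps := d / 20.
have heps : eps * 20 = d by rewrite /eps; field.
have e0 : 0 < eps by rewrite /eps divr_gt0.
have dc : d <= c by rewrite /d; nra.
have ec : eps <= c by lra.
have [N hN] := hyp eps e0.
pose K : R := N%:R.
have K0 : 0 <= K by rewrite /K ler0n.
have ra_le n : (ra A n)%:R <= n%:R + 1 :> R.
  by rewrite natr1 ler_nat /ra; apply: sum_bool_le.
have hK n : e n * e n <= eps * eps * n%:R + K * K.
  have n0 : 0 <= n%:R :> R by rewrite ler0n.
  have r0 : 0 <= (ra A n)%:R :> R by rewrite ler0n.
  case: (leqP N n) => hn.
    have := hN n hn; rewrite -/(e n) => h; nra.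
  have hnK : n%:R + 1 <= K by rewrite /K natr1 ler_nat.
  have := ra_le n => h.
  have : 0 <= eps * eps * n%:R by rewrite mulr_ge0 // mulr_ge0 // ltW.
  have h1 : e n <= K by rewrite /e; nra.
  have h2 : - K <= e n by rewrite /e; nra.
  nra.
have hL n : - (eps * n%:R + K) <= e n.
  have hnn : n%:R <= n%:R * n%:R :> R.
    case: n => [|n]; first by rewrite mulr0.
    have : 1 <= n.+1%:R :> R by rewrite ler1n.
    nra.
  have n0 : 0 <= n%:R :> R by rewrite ler0n.
  have h3 : e n * e n <= (eps * n%:R + K) * (eps * n%:R + K).
    have := hK n; have : 0 <= eps * eps by nra.
    have : 0 <= eps * n%:R * K by rewrite mulr_ge0 // mulr_ge0 // ltW.
    nra.
  have a0 : 0 <= eps * n%:R + K by rewrite addr_ge0 // mulr_ge0 // ltW.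
  rewrite lerNl; case: (lerP (- e n) 0) => hh; first by lra.
  nra.
pose x := eps * eps / (4 * ((K + 1) * (K + 1))).
have K1 : 0 < 4 * ((K + 1) * (K + 1)) by nra.
have hx : x * (4 * ((K + 1) * (K + 1))) = eps * eps by rewrite /x; field; nra.
have x0 : 0 < x by rewrite /x divr_gt0 // mulr_gt0.
have d1 : d <= 1 / 4.
  have := sqr_ge0 (c - 1 / 2); rewrite /d expr2; nra.
have xe : x <= eps * eps / 4 by nra.
have xK : K * K * x <= eps * eps / 4 by nra.
have xK1 : (K + 1) * x <= eps * eps / 4 by nra.
pose s := 1 - x.
have s0 : 0 <= s by rewrite /s; nra.
have s1 : s < 1 by rewrite /s; lra.
pose r := Num.sqrt s.
have rr : r * r = s by rewrite /r -expr2 sqr_sqrtr.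
have r0 : 0 <= r by rewrite /r sqrtr_ge0.
have r1 : r <= 1 by nra.
have ee4 : 0 < eps * eps / 4 by rewrite divr_gt0 // mulr_gt0.
have [M [M0 hM]] := decay s0 s1 ee4.
have M1 : 1 <= M%:R :> R by rewrite ler1n.
pose tau := M%:R * s ^+ M.
have sM0 : 0 <= s ^+ M by apply: exprn_ge0.
have sM1 : s ^+ M <= 1 by apply: exprn_ile1 => //; apply: ltW.
have htau : tau <= eps * eps / 4.
  apply: le_trans hM; rewrite /tau ler_wpM2r // !exprS expr0 mulr1.
  have : 1 <= M%:R * M%:R :> R by nra.
  nra.
pose G0 := \sum_(n < M) s ^+ n.
pose A1 := \sum_(n < M) n%:R * s ^+ n.
have hxs : x = 1 - s by rewrite /s; ring.
have hG0 : G0 * x = 1 - s ^+ M by rewrite /G0 -(geom1 s M) hxs.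
have hA1 : A1 * (x * x) = s - M%:R * s ^+ M + (M%:R - 1) * s ^+ M.+1.
  by rewrite /A1 -(geom2 s M) hxs expr2.
have G00 : 0 <= G0 by apply: sumr_ge0 => i _; exact: exprn_ge0.
have A10 : 0 <= A1 by apply: sumr_ge0 => i _; apply: mulr_ge0 => //; exact: exprn_ge0.
have sM1' : 0 <= s ^+ M.+1 by apply: exprn_ge0.
have sMs : s ^+ M.+1 <= s ^+ M by rewrite exprS; nra.
have A1le : A1 * (x * x) <= 1 by rewrite hA1; nra.
have A1ge : s - tau <= A1 * (x * x) by rewrite hA1 /tau; nra.
pose T := eps * eps / (x * x) + K * K / x + 4 * (M%:R ^+ 3 * s ^+ M).
have hxT : T * (x * x) = eps * eps + K * K * x + 4 * (M%:R ^+ 3 * s ^+ M) * (x * x).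
  by rewrite /T; field; rewrite gt_eqF.
have M3 : 0 <= M%:R ^+ 3 * s ^+ M :> R by rewrite mulr_ge0 // exprn_ge0.
have T0 : 0 < T.
  have t1 : 0 < eps * eps / (x * x) by rewrite divr_gt0 // mulr_gt0.
  have t2 : 0 <= K * K / x by apply: divr_ge0; [apply: mulr_ge0 | apply: ltW].
  rewrite /T; lra.
pose p := fun a => r ^+ a * (A a)%:R.
pose gh := fun _ : nat => true.
pose g := fun a => r ^+ a * (gh a)%:R.
have hlam : 0 <= c * r by rewrite mulr_ge0 // ltW.
have cs n : (n < M)%N -> Ecoef M p g (c * r) n = r ^+ n * e n.
  move=> hn; rewrite /Ecoef /p /g !conv_geom (cnt_small _ hn) /e.
  case: n hn => [|n] hn; first by ring.
  rewrite (conv_geom M r gh).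
  rewrite (@sum_true n.+1 (fun j => (j < M)%N && (n - j < M)%N && gh j && gh (n - j)%N)); last first.
    move=> j hj; rewrite /gh !andbT; apply/andP; split; [apply: leq_trans hj _ | apply: leq_ltn_trans (leq_subr _ _) _]; exact: ltnW hn.
  by rewrite exprS -natr1; ring.
have cl n : (M <= n)%N -> (n < M + M)%N -> Ecoef M p g (c * r) n ^+ 2 <= 4 * (M%:R * M%:R * s ^+ M).
  move=> h1 h2; case: n h1 h2 => [|n] h1 h2; first by move: M0; rewrite lt0n -leqn0 h1.
  rewrite /Ecoef /p /g (conv_geom M r A) (conv_geom M r gh).
  set a := (\sum_(j < n.+2) _)%N; set b := (\sum_(j < n.+1) _)%N.
  have ha : (a <= n.+2)%N by apply: sum_bool_le.
  have hb : (b <= n.+1)%N by apply: sum_bool_le.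
  have ha' : a%:R <= 2 * M%:R :> R.
    have : (a <= M + M)%N by apply: leq_trans ha _.
    by rewrite -(ler_nat R) natrD; lra.
  have hb' : b%:R <= 2 * M%:R :> R.
    have : (b <= M + M)%N by apply: leq_trans hb _; apply: ltnW.
    by rewrite -(ler_nat R) natrD; lra.
  have a0 : 0 <= a%:R :> R by rewrite ler0n.
  have b0 : 0 <= b%:R :> R by rewrite ler0n.
  have -> : r ^+ n.+1 * a%:R - c * r * (r ^+ n * b%:R) = r ^+ n.+1 * (a%:R - c * b%:R).
    by rewrite exprS; ring.
  rewrite exprMn -exprM mulnC exprM expr2 rr.
  have sn : s ^+ n.+1 <= s ^+ M by rewrite ler_wiXn2l // ltW.
  have sn0 : 0 <= s ^+ n.+1 by apply: exprn_ge0.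
  have q : (a%:R - c * b%:R) ^+ 2 <= 4 * (M%:R * M%:R) :> R.
    rewrite expr2.
    have q1 : a%:R - c * b%:R <= 2 * M%:R by nra.
    have q2 : - (2 * M%:R) <= a%:R - c * b%:R by nra.
    nra.
  have q0 : 0 <= (a%:R - c * b%:R) ^+ 2 :> R by rewrite sqr_ge0.
  nra.
have hE : \sum_(n < M + M) Ecoef M p g (c * r) n ^+ 2 <= T.
  rewrite big_split_ord /=.
  have P1 : \sum_(i < M) Ecoef M p g (c * r) i ^+ 2 <= eps * eps * A1 + K * K * G0.
    rewrite /A1 /G0 !mulr_sumr -big_split /=; apply: ler_sum => i _.
    rewrite cs // exprMn -exprM mulnC exprM expr2 rr.
    have := hK i; have : 0 <= s ^+ i by apply: exprn_ge0.
    rewrite expr2; nra.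
  have P2 : \sum_(i < M) Ecoef M p g (c * r) (M + i) ^+ 2 <= 4 * (M%:R ^+ 3 * s ^+ M).
    apply: le_trans.
      by apply: ler_sum => i _; apply: cl; [exact: leq_addr | rewrite ltn_add2l].
    rewrite sumr_const card_ord -mulr_natr !exprS expr0.
    by rewrite le_eqVlt; apply/orP; left; apply/eqP; ring.
  apply: le_trans (lerD P1 P2) _.
  rewrite /T lerD2r.
  have xx0 : 0 < x * x by apply: mulr_gt0.
  have u1 : A1 <= 1 / (x * x) by rewrite (ler_pdivlMr _ _ xx0).
  have u2 : G0 <= 1 / x by rewrite (ler_pdivlMr _ _ x0) hG0; lra.
  have -> : eps * eps / (x * x) = eps * eps * (1 / (x * x)) by rewrite mul1r.
  have -> : K * K / x = K * K * (1 / x) by rewrite mul1r.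
  apply: lerD; apply: ler_wpM2l => //; nra.
have hF := fourier_real M0 hlam T0 hE.
pose S := \sum_(a < M) s ^+ a * (A a)%:R.
have sq_r a : r ^+ a ^+ 2 = s ^+ a by rewrite -exprM mulnC exprM expr2 rr.
have hS : S <= c * r * G0 + Num.sqrt T.
  have e1 : \sum_(i < M) p i ^+ 2 = S.
    apply: eq_bigr => i _; rewrite /p exprMn sq_r.
    by case: (A i); rewrite /= ?expr0n ?mulr0 // expr1n.
  have e2 : \sum_(i < M) g i ^+ 2 = G0.
    by apply: eq_bigr => i _; rewrite /g /gh /= mulr1 sq_r.
  by rewrite -e1 -e2.
have S0 : 0 <= S.
  by apply: sumr_ge0 => i _; apply: mulr_ge0; [exact: exprn_ge0 | exact: ler0n].
pose w := x * Num.sqrt T.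
have w0 : 0 <= w by rewrite /w mulr_ge0 ?sqrtr_ge0 // ltW.
have ww : w * w <= (2 * eps) * (2 * eps).
  have -> : w * w = T * (x * x).
    have st : Num.sqrt T * Num.sqrt T = T by rewrite -expr2 sqr_sqrtr // ltW.
    by rewrite /w mulrACA st mulrC.
  rewrite hxT.
  have : 4 * (M%:R ^+ 3 * s ^+ M) * (x * x) <= eps * eps.
    have : x * x <= 1 by nra.
    nra.
  nra.
have w2 : w <= 2 * eps by nra.
pose u := S * x.
have u0 : 0 <= u by rewrite /u mulr_ge0 // ltW.
have hu : u <= c + 2 * eps.
  have : S * x <= c * r * (G0 * x) + w.
    have h0 : S * x <= (c * r * G0 + Num.sqrt T) * x by rewrite ler_wpM2r // ltW.
    by apply: le_trans h0 _; rewrite /w le_eqVlt; apply/orP; left; apply/eqP; ring.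
  rewrite hG0 /u => h.
  have : c * r * (1 - s ^+ M) <= c by nra.
  lra.
have lowS : (c - eps) * A1 - K * G0 <= S * S.
  rewrite -expr2.
  pose q := fun a => s ^+ a * (A a)%:R.
  have hq : forall a, 0 <= q a by move=> a; apply: mulr_ge0; [exact: exprn_ge0 | exact: ler0n].
  apply: le_trans (sq_ge M hq).
  rewrite /A1 /G0 !mulr_sumr -sumrB; apply: ler_sum => n _.
  rewrite /q (conv_geom M s A) (cnt_small _ (ltn_ord n)).
  have := hL n; rewrite /e => h.
  have : 0 <= s ^+ n by apply: exprn_ge0.
  nra.
have lowu : (c - eps) * (s - tau) - K * x <= u * u.
  have h1 : (c - eps) * (s - tau) <= (c - eps) * (A1 * (x * x)).
    by apply: ler_wpM2l => //; lra.
  have h2 : K * G0 * (x * x) <= K * x.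
    have -> : K * G0 * (x * x) = K * x * (G0 * x) by ring.
    rewrite hG0; nra.
  have : ((c - eps) * A1 - K * G0) * (x * x) <= S * S * (x * x).
    by rewrite ler_wpM2r // mulr_ge0 // ltW.
  rewrite /u; nra.
have tau0 : 0 <= tau by rewrite /tau mulr_ge0.
exact: (final_arith c0 c1 heps e0 u0 hu lowu tau0 htau (ltW x0) xK1 K0).
Qed.
End Main.

Lemma seq_iota a k : List.seq a k = iota a k.
Proof. by elim: k a => //= k IH a; rewrite IH. Qed.

Lemma len_filter (f : nat -> bool) (l : list nat) :
  List.length (List.filter f l) = (\sum_(j <- l) f j)%N.
Proof.
elim: l => [|x l IH] /=; first by rewrite big_nil.
by rewrite big_cons; case: (f x) => /=; rewrite IH.
Qed.

Lemma RA_ra A n : RA A n = ra A n.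
Proof.
rewrite /RA len_filter seq_iota /ra -(big_mkord xpredT (fun j => (A j && A (n - j)%N) : nat)).
by rewrite /index_iota subn0.
Qed.

End Aux.

Unset Implicit Arguments.
From mathcomp Require Import ssreflect ssrbool ssrnat Rstruct.
Open Scope R_scope.

Theorem theorem10 (c : R) (hc0 : 0 < c) (hc1 : c < 1) :
  ~ exists A : nat -> bool,
      little_o (fun n => INR (RA A n) - c * INR n) (fun n => sqrt (INR n)).
Proof.
intros [A HA].
pose proof (bridge_stdlib _ HA) as hb.
apply: (Aux.main_contra (c:=c) (A:=A)).
- by apply/RltP.
- by apply/RltP.
- move=> eps /RltP he.
  destruct (hb eps he) as [N HN].
  exists N => n hn.
  have := HN n (elimT leP hn).
  rewrite Aux.RA_ra !INRE => h.
  by apply/RleP.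
Qed.
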